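(* Let $w>0$ and let $\rho_1,\rho_2:\mathbb R\to[0,\infty)$ be bounded unnormalised densities which are quasi-concave (every level set $\{x:\rho_i(x)\ge t\}$ is an interval) with nonempty $\arg\max\rho_i$ and \[ \inf_{r\in\arg\max\rho_1,\ s\in\arg\max\rho_2}|r-s|<w . \] Then $\rho_{\max}:=\max\{\rho_1,\rho_2\}\in\mathcal R_w$.
   Context: For $w>0$ and $\rho:\mathbb R\to[0,\infty)$ with level sets $K(t)=\{x:\rho(x)\ge t\}$, we write $\rho\in\mathcal R_w$ if there exist $t_1\le t_2$ in $[0,\|\rho\|_\infty]$ such that: (a) for all $t\in[0,t_1]\cup(t_2,\|\rho\|_\infty]$, $K(t)$ is an interval; (b) for all $t\in(t_1,t_2]$ there are disjoint intervals $K_1(t),K_2(t)$ with $K(t)=K_1(t)\cup K_2(t)$ and $K_i(t+\varepsilon)\subseteq K_i(t)$ for all $\varepsilon>0$, $i=1,2$; (c) for all $t\in[0,\|\rho\|_\infty]$, $\delta_t<w$, where $\delta_t=\inf_{r\in K_1(t),s\in K_2(t)}|r-s|$ for $t\in(t_1,t_2]$ and $\delta_t=0$ otherwise. *)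

(* Defs.v *)
From Stdlib Require Import Reals.
Open Scope R_scope.

Definition is_interval (I : R -> Prop) : Prop :=
  forall x y z, I x -> I y -> x <= z <= y -> I z.

Definition level_set (rho : R -> R) (t : R) : R -> Prop :=
  fun x => rho x >= t.

Definition quasi_concave (rho : R -> R) : Prop :=
  forall t, is_interval (level_set rho t).

Definition argmax (rho : R -> R) : R -> Prop :=
  fun x => forall y, rho y <= rho x.

Definition sup_norm_is (rho : R -> R) (M : R) : Prop :=
  is_lub (fun y => exists x, y = rho x) M.

(* The class R_w.  delta_t < w for t in (t1,t2] means
   inf_{r in K1(t), s in K2(t)} |r - s| < w, i.e. some r in K1(t), s in K2(t)
   satisfy |r-s| < w (for t outside (t1,t2], delta_t = 0 < w trivially). *)
Definition in_Rw (w : R) (rho : R -> R) : Prop :=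
  exists M t1 t2 (K1 K2 : R -> R -> Prop),
    sup_norm_is rho M /\
    0 <= t1 <= t2 /\ t2 <= M /\
    (forall t, ((0 <= t <= t1) \/ (t2 < t <= M)) -> is_interval (level_set rho t)) /\
    (forall t, t1 < t <= t2 ->
       is_interval (K1 t) /\ is_interval (K2 t) /\
       (forall x, ~ (K1 t x /\ K2 t x)) /\
       (forall x, level_set rho t x <-> (K1 t x \/ K2 t x))) /\
    (forall t eps, t1 < t -> 0 < eps -> t + eps <= t2 ->
       (forall x, K1 (t + eps) x -> K1 t x) /\
       (forall x, K2 (t + eps) x -> K2 t x)) /\
    (forall t, t1 < t <= t2 ->
       exists r s, K1 t r /\ K2 t s /\ Rabs (r - s) < w).

(* Main.v *)
Require Import Defs.
From Stdlib Require Import Reals Lra.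
Open Scope R_scope.

Lemma Rmax_ge_iff a b t : Rmax a b >= t <-> (a >= t \/ b >= t).
Proof. unfold Rmax; destruct (Rle_dec a b); split; intros; try lra; destruct H; lra. Qed.

Theorem lemma4p1 (w : R) (rho1 rho2 : R -> R) :
  0 < w ->
  (forall x, 0 <= rho1 x) -> (forall x, 0 <= rho2 x) ->
  (exists B, forall x, rho1 x <= B) -> (exists B, forall x, rho2 x <= B) ->
  quasi_concave rho1 -> quasi_concave rho2 ->
  (exists x, argmax rho1 x) -> (exists x, argmax rho2 x) ->
  (exists r s, argmax rho1 r /\ argmax rho2 s /\ Rabs (r - s) < w) ->
  in_Rw w (fun x => Rmax (rho1 x) (rho2 x)).
Proof.
  intros Hw H1 H2 _ _ Q1 Q2 _ _ [r [s [Ar [Asm Hrs]]]].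
  set (mm := Rmin (rho1 r) (rho2 s)).
  set (btw := fun z => (r < z < s) \/ (s < z < r)).
  set (E := fun t => 0 <= t <= mm /\ forall z, btw z -> Rmax (rho1 z) (rho2 z) >= t).
  assert (Hm0 : 0 <= mm) by (unfold mm; apply Rmin_glb; auto).
  assert (Hm1 : mm <= rho1 r) by apply Rmin_l.
  assert (Hm2 : mm <= rho2 s) by apply Rmin_r.
  assert (HE0 : E 0).
  { split; [lra|]. intros z _. specialize (H1 z). specialize (H2 z).
    apply Rmax_ge_iff. lra. }
  destruct (completeness E) as [t1 [Hub Hlub]].
  { exists mm. intros t [Ht _]. lra. }
  { exists 0. exact HE0. }
  assert (Ht10 : 0 <= t1) by (apply Hub; exact HE0).
  assert (Ht1m : t1 <= mm) by (apply Hlub; intros t [Ht _]; lra).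
  assert (Hbelow : forall t z, t <= t1 -> btw z -> Rmax (rho1 z) (rho2 z) >= t).
  { intros t z Ht Bz. destruct (Rge_dec (Rmax (rho1 z) (rho2 z)) t) as [|Hn]; auto.
    exfalso. assert (t1 <= Rmax (rho1 z) (rho2 z)).
    { apply Hlub. intros e [He Hz]. specialize (Hz z Bz). lra. }
    lra. }
  assert (Habove : forall t, t1 < t <= mm -> exists z, btw z /\ Rmax (rho1 z) (rho2 z) < t).
  { intros t Ht. apply Classical_Prop.NNPP. intro Hn.
    assert (E t).
    { split; [lra|]. intros z Bz. destruct (Rge_dec (Rmax (rho1 z) (rho2 z)) t); auto.
      exfalso; apply Hn; exists z; split; auto; lra. }
    specialize (Hub t H). lra. }
  set (M := Rmax (rho1 r) (rho2 s)).
  exists M, t1, mm, (level_set rho1), (level_set rho2).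
  split; [|split; [lra|split; [unfold M, mm; apply Rle_trans with (rho1 r); [apply Rmin_l|apply Rmax_l]|]]].
  { split.
    - intros y [x ->]. unfold M. specialize (Ar x). specialize (Asm x).
      unfold Rmax at 1; destruct (Rle_dec (rho1 x) (rho2 x)).
      + apply Rle_trans with (rho2 s); [lra|apply Rmax_r].
      + apply Rle_trans with (rho1 r); [lra|apply Rmax_l].
    - intros b Hb. unfold M. apply Rmax_lub.
      + apply Rle_trans with (Rmax (rho1 r) (rho2 r)); [apply Rmax_l|]. apply Hb; eauto.
      + apply Rle_trans with (Rmax (rho1 s) (rho2 s)); [apply Rmax_r|]. apply Hb; eauto. }
  split.
  { intros t [Ht|Ht].
    - intros x y u Hx Hy Hu. unfold level_set in *.
      apply Rmax_ge_iff in Hx; apply Rmax_ge_iff in Hy; apply Rmax_ge_iff.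
      assert (Lr : rho1 r >= t) by lra. assert (Ls : rho2 s >= t) by lra.
      destruct Hx as [Hx|Hx]; destruct Hy as [Hy|Hy].
      + left. exact (Q1 t x y u Hx Hy Hu).
      + destruct (Rle_dec u r).
        * left. exact (Q1 t x r u Hx Lr ltac:(lra)).
        * destruct (Rle_dec s u).
          -- right. exact (Q2 t s y u Ls Hy ltac:(lra)).
          -- apply Rmax_ge_iff. apply Hbelow; [lra|]. left; lra.
      + destruct (Rle_dec u s).
        * right. exact (Q2 t x s u Hx Ls ltac:(lra)).
        * destruct (Rle_dec r u).
          -- left. exact (Q1 t r y u Lr Hy ltac:(lra)).
          -- apply Rmax_ge_iff. apply Hbelow; [lra|]. right; lra.
      + right. exact (Q2 t x y u Hx Hy Hu).
    - unfold mm, Rmin in Ht. destruct (Rle_dec (rho1 r) (rho2 s)).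
      + intros x y u Hx Hy Hu. unfold level_set in *.
        apply Rmax_ge_iff in Hx; apply Rmax_ge_iff in Hy; apply Rmax_ge_iff.
        specialize (Ar x) as Ax. specialize (Ar y) as Ay.
        right. apply (Q2 t x y u); [destruct Hx|destruct Hy|]; auto; lra.
      + intros x y u Hx Hy Hu. unfold level_set in *.
        apply Rmax_ge_iff in Hx; apply Rmax_ge_iff in Hy; apply Rmax_ge_iff.
        specialize (Asm x) as Ax. specialize (Asm y) as Ay.
        left. apply (Q1 t x y u); [destruct Hx|destruct Hy|]; auto; lra. }
  split.
  { intros t Ht. split; [apply Q1|split; [apply Q2|split]].
    - intros x [Hx1 Hx2]. unfold level_set in *.
      destruct (Habove t Ht) as [z [Bz Hz]].
      assert (Lr : rho1 r >= t) by lra. assert (Ls : rho2 s >= t) by lra.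
      assert (Rmax (rho1 z) (rho2 z) >= t); [|lra].
      apply Rmax_ge_iff. destruct Bz as [Bz|Bz]; destruct (Rle_dec z x).
      + left. exact (Q1 t r x z Lr Hx1 ltac:(lra)).
      + right. exact (Q2 t x s z Hx2 Ls ltac:(lra)).
      + right. exact (Q2 t s x z Ls Hx2 ltac:(lra)).
      + left. exact (Q1 t x r z Hx1 Lr ltac:(lra)).
    - intros x. unfold level_set. apply Rmax_ge_iff. }
  split.
  { intros t eps _ Heps _. unfold level_set. split; intros; lra. }
  { intros t Ht. exists r, s. unfold level_set. repeat split; auto; lra. }
Qed.
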